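(* The Monroe–Harsanyi–approval (MHA) and Monroe–Rawls–approval (MRA) rules fail the lower quota. Let $\mathcal C=\{c_1,\dots,c_8\}$, $S=7$, and $|\mathcal V|=10$, with - $B(\{c_1,c_2,c_3,c_4\})=6$; - $B(\{c_5\})=B(\{c_6\})=B(\{c_7\})=B(\{c_8\})=1$; - all other values of $B$ equal to $0$. With $\mathcal A=y_1=\{c_1,c_2,c_3,c_4\}$ and $q=\frac{6}{10}\cdot7$, one has $|\mathcal A|\ge\lfloor q\rfloor=4$. Nevertheless, every $\mathcal W\in\mathrm{MHA}(\sigma)$ and every $\mathcal W\in\mathrm{MRA}(\sigma)$ satisfies $|\mathcal W\cap\{c_1,c_2,c_3,c_4\}|=3<4$.
   Context: An approval-based multi-winner election is a tuple $\sigma=\langle \mathcal V,\mathcal C,S,B\rangle$, where $\mathcal V$ is a finite set of agents, $\mathcal C$ is a finite set of candidates, $1\le S\le|\mathcal C|$ is an integer, and $B:2^{\mathcal C}\to\mathbb N$ gives, for each $\mathcal A\subseteq\mathcal C$, the number $B(\mathcal A)$ of agents whose ballot is exactly $\mathcal A$. For $\mathcal W\subseteq\mathcal C$ with $|\mathcal W|=S$, the set $\mathfrak M_{\sigma,\mathcal W}$ of Monroe assignment functions consists of all $M:2^{\mathcal C}\times\mathcal W\to\mathbb N$ such that: - $\sum_{c\in\mathcal W}M(\mathcal A,c)=B(\mathcal A)$ for every $\mathcal A\subseteq\mathcal C$; - $\lfloor|\mathcal V|/S\rfloor\le\sum_{\mathcal A}M(\mathcal A,c)\le\lceil|\mathcal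 V|/S\rceil$ for every $c\in\mathcal W$. The MHA rule is $\mathrm{MHA}(\sigma)=\operatorname{argmin}_{\mathcal W\subseteq\mathcal C,|\mathcal W|=S}\min_{M\in\mathfrak M_{\sigma,\mathcal W}}\sum_{\mathcal A\subseteq\mathcal C}\sum_{c\in\mathcal W,c\notin\mathcal A}M(\mathcal A,c)$. For the MRA rule, let $\mathrm{MRA}_0(\sigma)$ be the set of $S$-subsets $\mathcal W$ for which some $M\in\mathfrak M_{\sigma,\mathcal W}$ has $\sum_{\mathcal A}\sum_{c\in\mathcal W,c\notin\mathcal A}M(\mathcal A,c)=0$. Then $\mathrm{MRA}(\sigma)=\mathrm{MRA}_0(\sigma)$ if this set is non-empty; otherwise $\mathrm{MRA}(\sigma)$ is the set of all $S$-subsets of $\mathcal C$. *)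

(* Defs.v *)
From mathcomp Require Import all_boot.
Set Implicit Arguments. Unset Strict Implicit. Unset Printing Implicit Defensive.

(* An approval-based multi-winner election over a finite candidate type C:
   the committee size S and the ballot-count function B : 2^C -> N. *)
Definition num_agents (C : finType) (B : {set C} -> nat) : nat :=
  \sum_(A : {set C}) B A.

Definition ceil_div (n d : nat) : nat := (n + d.-1) %/ d.

(* M is a Monroe assignment function for committee W (only its values on
   pairs (A, c) with c \in W matter). *)
Definition monroe_assignment (C : finType) (S : nat) (B : {set C} -> nat)
    (W : {set C}) (M : {set C} -> C -> nat) : Prop :=
  (forall A : {set C}, \sum_(c in W) M A c = B A) /\
  (forall c, c \in W ->
     num_agents B %/ S <= \sum_(A : {set C}) M A c <= ceil_div (num_agents B) S).

Definition monroe_cost (C : finType) (W : {set C}) (M : {set C} -> C -> nat) : nat :=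
  \sum_(A : {set C}) \sum_(c in W | c \notin A) M A c.

(* W \in MHA(sigma): W is an S-subset whose optimal Monroe cost is minimal
   among all S-subsets (min over an empty set of assignments = +infinity). *)
Definition MHA (C : finType) (S : nat) (B : {set C} -> nat) (W : {set C}) : Prop :=
  #|W| = S /\
  exists M, monroe_assignment S B W M /\
    forall (W' : {set C}) M', #|W'| = S -> monroe_assignment S B W' M' ->
      monroe_cost W M <= monroe_cost W' M'.

Definition MRA0 (C : finType) (S : nat) (B : {set C} -> nat) (W : {set C}) : Prop :=
  #|W| = S /\ exists M, monroe_assignment S B W M /\ monroe_cost W M = 0.

Definition MRA (C : finType) (S : nat) (B : {set C} -> nat) (W : {set C}) : Prop :=
  MRA0 S B W \/ ((~ exists W0, MRA0 S B W0) /\ #|W| = S).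

(* The concrete election: candidates c_1..c_8 are the ordinals 0..7 of 'I_8. *)
Definition cand (i : nat) : 'I_8 := inord i.
Definition y1 : {set 'I_8} := [set cand 0; cand 1; cand 2; cand 3].
Definition ex_B (A : {set 'I_8}) : nat :=
  if A == y1 then 6
  else if (A == [set cand 4]) || (A == [set cand 5])
          || (A == [set cand 6]) || (A == [set cand 7]) then 1
  else 0.
Definition ex_S : nat := 7.

(* Main.v *)
Require Import Defs.
From mathcomp Require Import all_boot.

Lemma candE k : k < 8 -> val (cand k) = k.
Proof. by move=> h; exact: inordK. Qed.

Lemma eq_cand (d : 'I_8) k : k < 8 -> (d == cand k) = (val d == k).
Proof. by move=> h; rewrite -val_eqE /= candE. Qed.

Lemma in_y1 (d : 'I_8) : (d \in y1) = (val d < 4).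
Proof.
rewrite /y1 !inE !eq_cand //.
by case: d => [[|[|[|[|m]]]] Hm].
Qed.

Lemma card_y1 : #|y1| = 4.
Proof.
have cU (A : {set 'I_8}) a : #|A :|: [set a]| = (a \notin A) + #|A|.
  by rewrite setUC cardsU1.
rewrite /y1 !cU cards1 !inE !eq_cand //.
by rewrite !candE.
Qed.

Lemma set1_ne_y1 (d : 'I_8) : ([set d] == y1) = false.
Proof.
apply/negbTE/eqP => h; have := card_y1; by rewrite -h cards1.
Qed.

Lemma exB_ge4 (d : 'I_8) : 4 <= val d -> ex_B [set d] = 1.
Proof.
move=> h; rewrite /ex_B set1_ne_y1 !(inj_eq set1_inj) !eq_cand //.
by case: d h => [[|[|[|[|[|[|[|[|m]]]]]]]] Hm].
Qed.

Lemma exB_lt4 (d : 'I_8) : val d < 4 -> ex_B [set d] = 0.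
Proof.
move=> h; rewrite /ex_B set1_ne_y1 !(inj_eq set1_inj) !eq_cand //.
by case: d h => [[|[|[|[|[|[|[|[|m]]]]]]]] Hm].
Qed.

Lemma exB_supp A : ex_B A != 0 -> A = y1 \/ exists c, A = [set c].
Proof.
rewrite /ex_B; case: (A =P y1) => [->|_]; first by left.
case: ifP => // h _; right.
by move: h => /orP [/orP [/orP [] | ] | ] /eqP ->; eexists.
Qed.

Lemma num_agents_ex : num_agents ex_B = 10.
Proof.
rewrite /num_agents (bigD1 y1) //=.
rewrite (bigD1 [set cand 4]) /= ?set1_ne_y1 //.
rewrite (bigD1 [set cand 5]) /= ?set1_ne_y1 ?(inj_eq set1_inj) ?eq_cand ?candE //.
rewrite (bigD1 [set cand 6]) /= ?set1_ne_y1 ?(inj_eq set1_inj) ?eq_cand ?candE //.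
rewrite (bigD1 [set cand 7]) /= ?set1_ne_y1 ?(inj_eq set1_inj) ?eq_cand ?candE //.
rewrite big1 /=.
  by rewrite {1}/ex_B eqxx !exB_ge4 ?candE.
move=> A /andP [/andP [/andP [/andP [hy h4] h5] h6] h7].
by rewrite /ex_B (negbTE hy) (negbTE h4) (negbTE h5) (negbTE h6) (negbTE h7).
Qed.

Lemma card_compl (W : {set 'I_8}) : #|W| + #|~: W| = 8.
Proof. by rewrite cardsC card_ord. Qed.

Lemma cost_pos (W : {set 'I_8}) M : y1 \subset W -> #|W| = 7 ->
  monroe_assignment ex_S ex_B W M -> 0 < monroe_cost W M.
Proof.
move=> sub cW [hA _].
have : ~: W != set0.
  have h : #|~: W| = 1.
    by have := card_compl W; rewrite cW => /eqP; rewrite -[8]/(7+1) eqn_add2l => /eqP.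
  by rewrite -cards_eq0 h.
case/set0Pn => d; rewrite inE => dW.
have d4 : 4 <= val d.
  by rewrite leqNgt -in_y1; apply: contra dW; exact: (subsetP sub).
have h := hA [set d]; rewrite exB_ge4 // in h.
rewrite /monroe_cost (bigD1 [set d]) //=.
rewrite (eq_bigl (fun c => c \in W)) ?h //.
move=> c; rewrite inE; case cW': (c \in W) => //=; apply/eqP => e.
by rewrite -e cW' in dW.
Qed.

Definition W0 : {set 'I_8} := ~: [set cand 0].
Definition M0 (A : {set 'I_8}) (c : 'I_8) : nat :=
  if A == y1 then (c \in y1) * 2 else (A == [set c]) * ex_B A.

Lemma card_W0 : #|W0| = 7.
Proof. by have := card_compl [set cand 0]; rewrite cards1 /W0 add1n => [[]]. Qed.

Lemma card_W0y1 : #|W0 :&: y1| = 3.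
Proof.
rewrite /W0 setIC -setDE.
have := cardsD1 (cand 0) y1; rewrite card_y1 in_y1 candE //.
by rewrite add1n => [[]].
Qed.

Lemma M0_assign : monroe_assignment ex_S ex_B W0 M0.
Proof.
split.
  move=> A; rewrite /M0; case: (A =P y1) => [->|nA].
    rewrite (eq_bigr (fun c => if c \in y1 then 2 else 0)); last by move=> c _; case: (c \in y1).
    rewrite -big_mkcondr (eq_bigl (mem (W0 :&: y1))); last by move=> c; rewrite !inE.
    by rewrite sum_nat_const card_W0y1 /ex_B eqxx.
  have [e0|ne] := eqVneq (ex_B A) 0.
    by rewrite e0 big1 // => c _; rewrite muln0.
  case: (exB_supp A ne) => [//|[c1 e1]]; subst A.
  have c14 : 4 <= val c1.
    by rewrite leqNgt; apply/negP => /exB_lt4 h; rewrite h in ne.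
  have c1W : c1 \in W0.
    rewrite /W0 !inE eq_cand //; by case: (val c1) c14.
  rewrite (bigD1 c1) //= eqxx mul1n big1 ?addn0 //.
  by move=> c /andP [_ nc]; rewrite (inj_eq set1_inj) eq_sym (negbTE nc).
move=> c cW; rewrite num_agents_ex /ceil_div /ex_S /=.
rewrite (bigD1 y1) //= (bigD1 [set c]) /= ?set1_ne_y1 // big1.
  rewrite {1}/M0 eqxx /M0 set1_ne_y1 eqxx addn0 in_y1 eqxx.
  case: (ltnP (val c) 4) => h.
    by rewrite exB_lt4.
  by rewrite exB_ge4.
move=> A /andP [hy hc]; rewrite /M0 (negbTE hy) (negbTE hc) //.
Qed.

Lemma M0_cost : monroe_cost W0 M0 = 0.
Proof.
rewrite /monroe_cost big1 // => A _; rewrite big1 // => c /andP [_ cA].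
rewrite /M0; case: (A =P y1) => [e|_].
  by subst A; rewrite (negbTE cA).
by case: (A =P [set c]) => // e; rewrite e set11 in cA.
Qed.

Lemma key (W : {set 'I_8}) : #|W| = 7 -> ~~ (y1 \subset W) -> #|W :&: y1| = 3.
Proof.
move=> cW /subsetPn [e ey eW].
have : #|~: W| == 1.
  by have := card_compl W; rewrite cW => /eqP; rewrite -[8]/(7+1) eqn_add2l.
case/cards1P => x hx.
have ex : e = x by apply/set1P; rewrite -hx inE.
subst x.
have -> : W = ~: [set e] by rewrite -hx setCK.
rewrite setIC -setDE.
have := cardsD1 e y1; rewrite card_y1 ey.
by rewrite add1n => [[]].
Qed.

Theorem theorem13 :
  num_agents ex_B = 10 /\
  (ex_B y1 * ex_S) %/ num_agents ex_B = 4 /\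
  (ex_B y1 * ex_S) %/ num_agents ex_B <= #|y1| /\
  (forall W : {set 'I_8}, MHA ex_S ex_B W -> #|W :&: y1| = 3) /\
  (forall W : {set 'I_8}, MRA ex_S ex_B W -> #|W :&: y1| = 3).
Proof.
have hB : ex_B y1 = 6 by rewrite /ex_B eqxx.
have zero_cost (W : {set 'I_8}) M : #|W| = 7 -> monroe_assignment ex_S ex_B W M ->
    monroe_cost W M = 0 -> #|W :&: y1| = 3.
  move=> cW hM c0; apply: key => //; apply/negP => sub.
  by have := @cost_pos W M sub cW hM; rewrite c0.
split; first exact: num_agents_ex.
rewrite num_agents_ex hB card_y1 /ex_S.
split; first by [].
split; first by [].
split.
  move=> W [cW [M [hM hmin]]].
  have := hmin W0 M0 card_W0 M0_assign; rewrite M0_cost leqn0 => /eqP.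
  exact: zero_cost.
move=> W [[cW [M [hM c0]]] | [nex _]].
  exact: zero_cost hM c0.
exfalso; apply: nex; exists W0; split; first exact: card_W0.
by exists M0; split; [exact: M0_assign | exact: M0_cost].
Qed.
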